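(* Let $X$ be a $T_1$ space, $\mathcal C$ a pre-pseudogroup on $X$, and $f\in\mathcal C(U,V)$. Then the underlying map $\bar f:U\to V$ is continuous; moreover it is a local homeomorphism.
   Context: $X_{top}$ denotes the set of open subsets of $X$, regarded as a category with exactly one morphism $U\to V$ iff $U\subseteq V$. Let $\mathcal C$ be a small category with $\mathrm{Ob}(\mathcal C)=X_{top}$ containing $X_{top}$ as a subcategory (identity on objects). For each open $V$, $\mathcal C(-,V)$ is a presheaf of sets on $X$ (restriction along $U'\subseteq U$ = precomposition with the inclusion morphism). For $x\in X$ let $\mathcal C_x(V)=\operatorname{colim}_{U\ni x}\mathcal C(U,V)$ (germ of $f\in\mathcal C(U,V)$ at $x$ written $f_x$); postcomposition with inclusions makes this functorial in $V$, and for $y\in X$ let $\mathcal C_x^y=\lim_{V\ni y}\mathcal C_x(V)$ (limit over open neighbourhoods of $y$), with projections $\mathcal C_x^y\to\mathcal C_x(V)$. Composition in $\mathcal C$ induces $\mathcal C_y^z\times\mathcal C_x^y\to\mathcal C_x^z$: given $\varphi\in\mathcal C_x^y,\psi\in\mathcal C_y^z$ and open $W\ni z$, choose $g\in\mathcal C(V,W)$, $y\in V$, representing the component $\psi_W$, and $f\in\mathcal C(U,V)$ representing $\varphi_V$; the $W$-component of $\psi\circ\varphi$ is $(g\circ f)_x$. This defines a category $\mathcal C^\star$ with objects the points of $X$ and $\mathcal C^\star(x,y)=\mathcal C_x^y$. For $X$ a $T_1$ space, a pre-pseudogroup on $X$ is such a $\mathcal C$ satisfying: (1) $\mathrm{Ob}(\mathcal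 C)=\mathrm{Ob}(X_{top})$; (2) for every open $V$ and $x\in X$, the map $\coprod_{y\in V}\mathcal C_x^y\to\mathcal C_x(V)$ induced by the projections is a bijection; (3) $\mathcal C^\star$ is a groupoid. Underlying map: for $f\in\mathcal C(U,V)$ and $x\in U$, by (2) there is a unique $y\in V$ such that the germ $f_x\in\mathcal C_x(V)$ lies in the image of $\mathcal C_x^y$; set $\bar f(x)=y$. This gives a map $\bar f:U\to V$. *)

(* Defs.v *)
From Stdlib Require Import Classical.

Record Topology (X : Type) := {
  is_open : (X -> Prop) -> Prop;
  open_full : is_open (fun _ => True);
  open_inter : forall U V, is_open U -> is_open V -> is_open (fun x => U x /\ V x);
  open_union : forall (I : Type) (F : I -> X -> Prop),
      (forall i, is_open (F i)) -> is_open (fun x => exists i, F i x)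
}.
Arguments is_open {X} _ _.

Definition T1 {X : Type} (T : Topology X) : Prop :=
  forall x y : X, x <> y -> exists U, is_open T U /\ U x /\ ~ U y.

Record Opn {X : Type} (T : Topology X) := {
  carrier :> X -> Prop;
  carrier_open : is_open T carrier
}.
Arguments carrier {X T} _ _.

Definition sub {X : Type} {T : Topology X} (U V : Opn T) : Prop :=
  forall x, U x -> V x.

Record PCat {X : Type} (T : Topology X) := {
  hom : Opn T -> Opn T -> Type;
  comp : forall U V W : Opn T, hom V W -> hom U V -> hom U W;
  cid : forall U : Opn T, hom U U;
  comp_assoc : forall U V W Z (h : hom W Z) (g : hom V W) (f : hom U V),
      comp U W Z h (comp U V W g f) = comp U V Z (comp V W Z h g) f;
  comp_id_l : forall U V (f : hom U V), comp U V V (cid V) f = f;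
  comp_id_r : forall U V (f : hom U V), comp U U V f (cid U) = f;
  incl : forall U V : Opn T, sub U V -> hom U V;
  incl_id : forall U (H : sub U U), incl U U H = cid U;
  incl_comp : forall U V W (H1 : sub U V) (H2 : sub V W) (H3 : sub U W),
      comp U V W (incl V W H2) (incl U V H1) = incl U W H3
}.
Arguments hom {X T} _ _ _.
Arguments comp {X T} _ {U V W} _ _.
Arguments cid {X T} _ _.
Arguments incl {X T} _ {U V} _.

Section Germs.
Context {X : Type} {T : Topology X} (C : PCat T).

(* A representative (U, x ∈ U, f ∈ C(U,V)) of a germ in C_x(V). *)
Record Germ (x : X) (V : Opn T) := mkGerm {
  gdom : Opn T;
  gpt : gdom x;
  gmap : hom C gdom V
}.
Arguments mkGerm {x V} gdom gpt gmap.
Arguments gdom {x V} _.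
Arguments gpt {x V} _.
Arguments gmap {x V} _.

(* Equality in the filtered colimit C_x(V) = colim_{U ∋ x} C(U,V). *)
Definition germ_eq {x : X} {V : Opn T} (g1 g2 : Germ x V) : Prop :=
  exists W : Opn T, W x /\
    exists (H1 : sub W (gdom g1)) (H2 : sub W (gdom g2)),
      comp C (gmap g1) (incl C H1) = comp C (gmap g2) (incl C H2).

Definition germ_post {x : X} {V V' : Opn T} (H : sub V V') (g : Germ x V) : Germ x V' :=
  mkGerm (gdom g) (gpt g) (comp C (incl C H) (gmap g)).

(* Elements of C_x^y = lim_{V ∋ y} C_x(V): compatible families of germs. *)
Record Costalk (x y : X) := {
  cs : forall V : Opn T, V y -> Germ x V;
  cs_compat : forall (V V' : Opn T) (hV : V y) (hV' : V' y) (H : sub V V'),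
      germ_eq (germ_post H (cs V hV)) (cs V' hV')
}.
Arguments cs {x y} _ _ _.

Definition cs_eq {x y : X} (p q : Costalk x y) : Prop :=
  forall (V : Opn T) (hV : V y), germ_eq (cs p V hV) (cs q V hV).

(* W-component of the composite psi ∘ phi in C^*, computed on representatives. *)
Definition star_comp_at {x y z : X} (psi : Costalk y z) (phi : Costalk x y)
    (W : Opn T) (hW : W z) : Germ x W :=
  let g := cs psi W hW in
  let f := cs phi (gdom g) (gpt g) in
  mkGerm (gdom f) (gpt f) (comp C (gmap g) (gmap f)).

Definition star_id_at (x : X) (W : Opn T) (hW : W x) : Germ x W :=
  mkGerm W hW (cid C W).

(* Condition (2): the map  ∐_{y ∈ V} C_x^y -> C_x(V)  is a bijection. *)
Definition cond2 : Prop :=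
  forall (V : Opn T) (x : X),
    (forall g : Germ x V, exists (y : X) (hy : V y) (p : Costalk x y),
        germ_eq (cs p V hy) g) /\
    (forall (y y' : X) (hy : V y) (hy' : V y') (p : Costalk x y) (p' : Costalk x y'),
        germ_eq (cs p V hy) (cs p' V hy') -> y = y') /\
    (forall (y : X) (hy : V y) (p p' : Costalk x y),
        germ_eq (cs p V hy) (cs p' V hy) -> cs_eq p p').

(* Condition (3): C^* is a groupoid (every morphism is invertible). *)
Definition cond3 : Prop :=
  forall (x y : X) (p : Costalk x y), exists q : Costalk y x,
    (forall (W : Opn T) (hW : W x), germ_eq (star_comp_at q p W hW) (star_id_at x W hW)) /\
    (forall (W : Opn T) (hW : W y), germ_eq (star_comp_at p q W hW) (star_id_at y W hW)).

(* Condition (1) Ob(C) = Ob(X_top) holds by construction of PCat. *)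
Definition pre_pseudogroup : Prop := cond2 /\ cond3.

(* g : X -> X is (on U) the underlying map of f ∈ C(U,V):
   for x ∈ U, g x is the y ∈ V such that the germ f_x ∈ C_x(V) lies in the
   image of C_x^y. *)
Definition underlying_map {U V : Opn T} (f : hom C U V) (g : X -> X) : Prop :=
  forall (x : X) (hx : U x), exists (hy : V (g x)) (p : Costalk x (g x)),
    germ_eq (cs p V hy) (mkGerm U hx f).

End Germs.

Definition continuous_on {X : Type} (T : Topology X) (U V : X -> Prop) (g : X -> X) : Prop :=
  (forall x, U x -> V (g x)) /\
  forall W, is_open T W -> is_open T (fun x => U x /\ W (g x)).

Definition local_homeo {X : Type} (T : Topology X) (U V : X -> Prop) (g : X -> X) : Prop :=
  (forall x, U x -> V (g x)) /\
  forall x, U x -> exists U' : X -> Prop,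
    is_open T U' /\ U' x /\ (forall z, U' z -> U z) /\
    let I := fun y => exists z, U' z /\ g z = y in
    is_open T I /\
    exists h : X -> X,
      (forall z, U' z -> h (g z) = z) /\
      (forall y, I y -> U' (h y) /\ g (h y) = y) /\
      (forall W, is_open T W -> is_open T (fun z => U' z /\ W (g z))) /\
      (forall W, is_open T W -> is_open T (fun y => I y /\ W (h y))).

(* Main.v *)
Require Import Defs.
From Stdlib Require Import Classical FunctionalExtensionality PropExtensionality IndefiniteDescription.

Arguments mkGerm {X T} C {x V} gdom gpt gmap.
Arguments gdom {X T C x V} _.
Arguments gpt {X T C x V} _.
Arguments gmap {X T C x V} _.
Arguments cs {X T C x y} _ _ _.
Arguments cs_compat {X T C x y} _ _ _ _ _ _.
Arguments comp_assoc {X T} p {U V W Z} h g f.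
Arguments comp_id_l {X T} p {U V} f.
Arguments comp_id_r {X T} p {U V} f.
Arguments incl_id {X T} p U H.
Arguments incl_comp {X T} p {U V W} H1 H2 H3.

Section L.
Context {X : Type} {T : Topology X} (C : PCat T).

Definition opI (A B : Opn T) : Opn T :=
  Build_Opn X T (fun x => A x /\ B x) (open_inter X T A B (carrier_open T A) (carrier_open T B)).

Lemma open_ext (P Q : X -> Prop) : (forall x, P x <-> Q x) -> is_open T P -> is_open T Q.
Proof.
  intros H HP. assert (E : P = Q).
  { apply functional_extensionality; intro x; apply propositional_extensionality; auto. }
  now rewrite <- E.
Qed.

Lemma open_local (P : X -> Prop) :
  (forall z, P z -> exists O : X -> Prop, is_open T O /\ O z /\ forall z', O z' -> P z') ->
  is_open T P.
Proof.
  intros H.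
  set (I := {O : X -> Prop | is_open T O /\ forall z', O z' -> P z'}).
  apply (open_ext (fun x => exists i : I, proj1_sig i x)).
  - intro x; split.
    + intros [i Hx]. destruct i as [O [HO HPO]]. simpl in Hx. auto.
    + intros Hx. destruct (H x Hx) as [O [HO [HOx HP]]].
      exists (exist _ O (conj HO HP)). exact HOx.
  - apply open_union. intros i. exact (proj1 (proj2_sig i)).
Qed.

Definition sref (U : Opn T) : sub U U := fun x h => h.

Lemma incl_irr (U V : Opn T) (H H' : sub U V) : incl C H = incl C H'.
Proof.
  rewrite <- (comp_id_r C (incl C H)). rewrite <- (incl_id C U (sref U)).
  apply incl_comp.
Qed.

Lemma restr (D E W W' : Opn T) (a : hom C D E) (H1 : sub W D) (H2 : sub W' W) (H3 : sub W' D) :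
  comp C a (incl C H3) = comp C (comp C a (incl C H1)) (incl C H2).
Proof. rewrite <- comp_assoc. now rewrite (incl_comp C H2 H1 H3). Qed.

Lemma geq_refl {x V} (g : Germ C x V) : germ_eq C g g.
Proof. exists (gdom g). split; [apply gpt|]. exists (sref _), (sref _). reflexivity. Qed.

Lemma geq_sym {x V} (g1 g2 : Germ C x V) : germ_eq C g1 g2 -> germ_eq C g2 g1.
Proof. intros [W [HW [H1 [H2 E]]]]. exists W; split; auto. exists H2, H1; auto. Qed.

Lemma geq_trans {x V} (g1 g2 g3 : Germ C x V) : germ_eq C g1 g2 -> germ_eq C g2 g3 -> germ_eq C g1 g3.
Proof.
  intros [W [HW [H1 [H2 E]]]] [W' [HW' [H2' [H3 E']]]].
  exists (opI W W'). split; [split; auto|].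
  assert (S1 : sub (opI W W') W) by (intros z [a b]; auto).
  assert (S2 : sub (opI W W') W') by (intros z [a b]; auto).
  exists (fun z h => H1 z (S1 z h)), (fun z h => H3 z (S2 z h)).
  rewrite (restr _ _ _ _ _ H1 S1 (fun z h => H1 z (S1 z h))). rewrite E.
  rewrite <- (restr _ _ _ _ _ H2 S1 (fun z h => H2 z (S1 z h))).
  rewrite (incl_irr _ _ (fun z h => H2 z (S1 z h)) (fun z h => H2' z (S2 z h))).
  rewrite (restr _ _ _ _ _ H2' S2 (fun z h => H2' z (S2 z h))). rewrite E'.
  rewrite <- (restr _ _ _ _ _ H3 S2 (fun z h => H3 z (S2 z h))). reflexivity.
Qed.

Definition gcmp {x E F} (h : hom C E F) (g : Germ C x E) : Germ C x F :=
  mkGerm C (gdom g) (gpt g) (comp C h (gmap g)).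

Lemma geq_cmp {x E F} (h : hom C E F) (g1 g2 : Germ C x E) :
  germ_eq C g1 g2 -> germ_eq C (gcmp h g1) (gcmp h g2).
Proof.
  intros [W [HW [H1 [H2 Eq]]]]. exists W; split; auto. exists H1, H2. simpl.
  rewrite <- !comp_assoc. now rewrite Eq.
Qed.

Lemma geq_map {x : X} {E D : Opn T} (hz : D x) (a b : hom C D E) : a = b ->
  germ_eq C (mkGerm C D hz a) (mkGerm C D hz b).
Proof. intros ->. apply geq_refl. Qed.

Lemma geq_pt {x : X} {E D : Opn T} (h1 h2 : D x) (a : hom C D E) :
  germ_eq C (mkGerm C D h1 a) (mkGerm C D h2 a).
Proof. exists D; split; auto. exists (sref _), (sref _). reflexivity. Qed.

Lemma geq_local {x V} (g1 g2 : Germ C x V) : germ_eq C g1 g2 ->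
  exists O : Opn T, O x /\ sub O (gdom g1) /\ sub O (gdom g2) /\
    forall z (h1 : gdom g1 z) (h2 : gdom g2 z), O z ->
      germ_eq C (mkGerm C (gdom g1) h1 (gmap g1)) (mkGerm C (gdom g2) h2 (gmap g2)).
Proof.
  intros [W [HW [H1 [H2 Eq]]]]. exists W; repeat split; auto.
  intros z h1 h2 Hz. exists W; split; auto. exists H1, H2. exact Eq.
Qed.

Definition pt {x E} (g : Germ C x E) (v : X) : Prop :=
  exists (hv : E v) (r : Costalk C x v), germ_eq C (cs r E hv) g.

Lemma pt_resp {x E} (g g' : Germ C x E) v : pt g v -> germ_eq C g g' -> pt g' v.
Proof. intros [hv [r Hr]] He. exists hv, r. eapply geq_trans; eauto. Qed.

Lemma pt_dom {x E} (g : Germ C x E) v : pt g v -> E v.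
Proof. intros [hv _]; exact hv. Qed.

Definition id_cs (z : X) : Costalk C z z.
Proof.
  refine (Build_Costalk C z z (fun V hV => mkGerm C V hV (cid C V)) _).
  intros V V' hV hV' H. exists V. split; auto. exists (sref V), H. simpl.
  rewrite (incl_id C V (sref V)). rewrite !comp_id_r. now rewrite comp_id_l.
Defined.

Lemma pt_id (D : Opn T) z (hz : D z) : pt (mkGerm C D hz (cid C D)) z.
Proof. exists hz, (id_cs z). simpl. apply geq_refl. Qed.

Section C2.
Hypothesis h2 : cond2 C.

Lemma pt_ex {x E} (g : Germ C x E) : exists v, pt g v.
Proof.
  destruct (h2 E x) as [Hs _]. destruct (Hs g) as [y [hy [p Hp]]].
  exists y, hy, p. exact Hp.
Qed.

Lemma pt_uniq {x E} (g : Germ C x E) v v' : pt g v -> pt g v' -> v = v'.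
Proof.
  intros [hv [r Hr]] [hv' [r' Hr']]. destruct (h2 E x) as [_ [Hi _]].
  apply (Hi v v' hv hv' r r'). eapply geq_trans; [exact Hr|]. now apply geq_sym.
Qed.

Lemma pt_post {x N E} (HN : sub N E) (m : Germ C x N) v : pt m v -> pt (germ_post C HN m) v.
Proof.
  intros [hv [r Hr]]. exists (HN v hv), r.
  eapply geq_trans; [apply geq_sym, (cs_compat r N E hv (HN v hv) HN)|].
  apply (geq_cmp (incl C HN)). exact Hr.
Qed.

Lemma pt_post_in {x N E} (HN : sub N E) (m : Germ C x N) v : pt (germ_post C HN m) v -> N v.
Proof.
  intros Hv. destruct (pt_ex m) as [v' Hv'].
  pose proof (pt_uniq _ _ _ Hv (pt_post HN m v' Hv')) as ->. exact (pt_dom _ _ Hv').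
Qed.

Lemma pt_factor {x E} (g : Germ C x E) v (N : Opn T) (HN : sub N E) :
  pt g v -> N v -> exists m : Germ C x N, germ_eq C (germ_post C HN m) g.
Proof.
  intros [hv [r Hr]] Nv. exists (cs r N Nv).
  eapply geq_trans; [apply (cs_compat r N E Nv hv HN)|exact Hr].
Qed.

Hypothesis hT1 : T1 T.

Lemma pt_comp (D E F : Opn T) (k : hom C D E) (h : hom C E F) z (hz : D z) w (hw : E w) v :
  pt (mkGerm C D hz k) w -> pt (mkGerm C E hw h) v -> pt (mkGerm C D hz (comp C h k)) v.
Proof.
  intros Hk Hh. destruct (pt_ex (mkGerm C D hz (comp C h k))) as [v' Hv'].
  destruct (classic (v = v')) as [->|Hne]; [exact Hv'|exfalso].
  destruct (hT1 v v' Hne) as [N0 [HN0 [N0v N0v']]].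
  set (N := Build_Opn X T (fun x => F x /\ N0 x) (open_inter X T F N0 (carrier_open T F) HN0)).
  assert (HNF : sub N F) by (intros ? [? ?]; auto).
  destruct (pt_factor _ _ N HNF Hh (conj (pt_dom _ _ Hh) N0v)) as [m Hm].
  destruct Hm as [W [HW [H1 [H2 Em]]]].
  destruct (pt_factor _ _ W H2 Hk HW) as [m' Hm'].
  set (m'' := mkGerm C (gdom m') (gpt m') (comp C (gmap m) (comp C (incl C H1) (gmap m')))).
  assert (Hpv : pt (germ_post C HNF m'') v').
  { eapply pt_resp; [exact Hv'|].
    eapply geq_trans; [apply geq_sym, (geq_cmp h _ _ Hm')|].
    unfold gcmp, germ_post, m''; simpl. apply geq_map.
    rewrite !comp_assoc. simpl in Em. rewrite Em. rewrite <- comp_assoc. reflexivity. }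
  apply pt_post_in in Hpv. destruct Hpv; auto.
Qed.

End C2.
End L.

Section M.
Context {X : Type} {T : Topology X} (C : PCat T).
Hypothesis h2 : cond2 C.

Lemma pt_pt {x : X} {D E : Opn T} (h1 h2' : D x) (a : hom C D E) v :
  pt C (mkGerm C D h1 a) v -> pt C (mkGerm C D h2' a) v.
Proof. intros H. eapply pt_resp; [exact H|apply geq_pt]. Qed.

Lemma bar_ex (D E : Opn T) (a : hom C D E) :
  exists g : X -> X, forall z (hz : D z), pt C (mkGerm C D hz a) (g z).
Proof.
  assert (H : forall z, exists v, forall hz : D z, pt C (mkGerm C D hz a) v).
  { intro z. destruct (classic (D z)) as [hz|nz].
    - destruct (pt_ex C h2 (mkGerm C D hz a)) as [v Hv]. exists v. intro hz'. eapply pt_pt; eauto.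
    - exists z. intro hz; contradiction. }
  exists (fun z => proj1_sig (constructive_indefinite_description _ (H z))).
  intros z hz. exact (proj2_sig (constructive_indefinite_description _ (H z)) hz).
Qed.

Lemma bar_cont (D E : Opn T) (a : hom C D E) (g : X -> X) :
  (forall z (hz : D z), pt C (mkGerm C D hz a) (g z)) ->
  forall W, is_open T W -> is_open T (fun z => D z /\ W (g z)).
Proof.
  intros Hg W HW. apply open_local. intros z [hz Wz].
  set (N := opI E (Build_Opn X T W HW)).
  assert (HNE : sub N E) by (intros ? [? ?]; auto).
  destruct (pt_factor C _ _ N HNE (Hg z hz) (conj (pt_dom C _ _ (Hg z hz)) Wz)) as [m Hm].
  destruct (geq_local C _ _ Hm) as [O [Oz [S1 [S2 Hl]]]].
  exists O. split; [apply carrier_open|split; auto].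
  intros z' Oz'. split; [exact (S2 z' Oz')|].
  assert (Hp : pt C (germ_post C HNE (mkGerm C (gdom m) (S1 z' Oz') (gmap m))) (g z')).
  { eapply pt_resp; [exact (Hg z' (S2 z' Oz'))|]. apply geq_sym. apply Hl. exact Oz'. }
  apply pt_post_in in Hp; [|exact h2]. destruct Hp; auto.
Qed.
End M.

Section N.
Context {X : Type} {T : Topology X} (C : PCat T).
Hypothesis h2 : cond2 C.
Hypothesis h3 : cond3 C.
Hypothesis hT1 : T1 T.

Lemma local_part (U V : Opn T) (f : hom C U V) (g : X -> X)
  (Hg : forall z (hz : U z), pt C (mkGerm C U hz f) (g z)) (x : X) (hx : U x) :
  exists U' : X -> Prop,
    is_open T U' /\ U' x /\ (forall z, U' z -> U z) /\
    let I := fun y => exists z, U' z /\ g z = y in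
    is_open T I /\
    exists h : X -> X,
      (forall z, U' z -> h (g z) = z) /\
      (forall y, I y -> U' (h y) /\ g (h y) = y) /\
      (forall W, is_open T W -> is_open T (fun z => U' z /\ W (g z))) /\
      (forall W, is_open T W -> is_open T (fun y => I y /\ W (h y))).
Proof.
  destruct (Hg x hx) as [hy [p Hp]].
  destruct (h3 x (g x) p) as [q [Eq1 Eq2]].
  specialize (Eq1 U hx). specialize (Eq2 V hy).
  unfold star_comp_at, star_id_at in Eq1, Eq2. simpl in Eq1, Eq2.
  set (G1 := cs q U hx) in *.
  set (G3 := cs p V hy) in *.
  set (BV := opI (gdom G1) V).
  assert (hBV : BV (g x)) by (split; [exact (gpt G1)|exact hy]).
  assert (c1 := cs_compat p BV (gdom G1) hBV (gpt G1) (fun z h => proj1 h)).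
  assert (c2 := cs_compat p BV V hBV hy (fun z h => proj2 h)).
  set (AU := opI (gdom G3) U).
  assert (hAU : AU x) by (split; [exact (gpt G3)|exact hx]).
  assert (d1 := cs_compat q AU (gdom G3) hAU (gpt G3) (fun z h => proj1 h)).
  assert (d2 := cs_compat q AU U hAU hx (fun z h => proj2 h)).
  fold G1 in d2. fold G3 in c2.
  assert (c3 := geq_trans C _ _ _ c2 Hp).
  set (G2 := cs p (gdom G1) (gpt G1)) in *.
  set (G4 := cs q (gdom G3) (gpt G3)) in *.
  set (G5 := cs p BV hBV) in *.
  set (G6 := cs q AU hAU) in *.
  clearbody G5 G6 G2 G4.
  destruct (bar_ex C h2 _ _ (gmap G1)) as [beta Hb].
  destruct (geq_local C _ _ Eq1) as [O1 [O1x [O1a [O1b L1]]]].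
  destruct (geq_local C _ _ c1) as [O2 [O2x [O2a [O2b L2]]]].
  destruct (geq_local C _ _ c3) as [O3 [O3x [O3a [O3b L3]]]].
  simpl in *.
  set (N := fun z => O1 z /\ O2 z /\ O3 z).
  assert (NO : is_open T N).
  { apply open_inter; [apply carrier_open|apply open_inter; apply carrier_open]. }
  assert (F1 : forall z, N z -> U z /\ gdom G1 (g z) /\ beta (g z) = z).
  { intros z [z1 [z2 z3]].
    assert (hU : U z) by exact (O3b z z3).
    assert (P1 : pt C (mkGerm C (gdom G2) (O1a z z1) (gmap G2)) (g z)).
    { set (cz := mkGerm C (gdom G5) (O2a z z2) (gmap G5)).
      destruct (pt_ex C h2 cz) as [v Hv].
      assert (Ev : v = g z).
      { apply (pt_uniq C h2 (mkGerm C U hU f)); [|apply Hg].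
        eapply pt_resp; [apply (pt_post C (N:=BV) (fun (z0 : X) (h : gdom G1 z0 /\ V z0) => proj2 h) cz v Hv)|].
        exact (L3 z _ hU z3). }
      subst v.
      eapply pt_resp; [apply (pt_post C (N:=BV) (fun (z0 : X) (h : gdom G1 z0 /\ V z0) => proj1 h) cz _ Hv)|].
      exact (L2 z _ _ z2). }
    assert (hw := pt_dom C _ _ P1).
    split; [exact hU|split; [exact hw|]].
    assert (P2 := pt_comp C h2 hT1 _ _ _ _ _ z (O1a z z1) (g z) hw (beta (g z)) P1 (Hb (g z) hw)).
    assert (P3 : pt C (mkGerm C (gdom G2) (O1a z z1) (comp C (gmap G1) (gmap G2))) z).
    { eapply pt_resp; [apply (pt_id C U z hU)|]. apply geq_sym. exact (L1 z _ _ z1). }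
    exact (pt_uniq C h2 _ _ _ P2 P3). }
  destruct (geq_local C _ _ Eq2) as [P1 [P1y [P1a [P1b L4]]]].
  destruct (geq_local C _ _ d1) as [P2 [P2y [P2a [P2b L5]]]].
  destruct (geq_local C _ _ d2) as [P3 [P3y [P3a [P3b L6]]]].
  destruct (geq_local C _ _ Hp) as [O4 [O4x [O4a [O4b L7]]]].
  simpl in *.
  assert (QO : is_open T (fun w => gdom G1 w /\ (fun u => N u /\ O4 u) (beta w))).
  { apply (bar_cont C h2 _ _ (gmap G1) beta Hb (fun u => N u /\ O4 u)). apply open_inter; [exact NO|apply carrier_open]. }
  set (M := fun w => P1 w /\ P2 w /\ P3 w /\ (gdom G1 w /\ (N (beta w) /\ O4 (beta w)))).
  assert (MO : is_open T M).
  { apply open_inter; [apply carrier_open|]. apply open_inter; [apply carrier_open|].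
    apply open_inter; [apply carrier_open|exact QO]. }
  assert (F2 : forall w, M w -> N (beta w) /\ g (beta w) = w).
  { intros w [w1 [w2 [w3 [wB [wN wO]]]]]. split; [exact wN|].
    set (cw := mkGerm C (gdom G6) (P2a w w2) (gmap G6)).
    destruct (pt_ex C h2 cw) as [v Hv].
    assert (Ev : v = beta w).
    { apply (pt_uniq C h2 (mkGerm C (gdom G1) wB (gmap G1))); [|apply Hb].
      eapply pt_resp; [apply (pt_post C (N:=AU) (fun (z0 : X) (h : gdom G3 z0 /\ U z0) => proj2 h) cw v Hv)|].
      exact (L6 w _ _ w3). }
    subst v.
    assert (Pb : pt C (mkGerm C (gdom G4) (P1a w w1) (gmap G4)) (beta w)).
    { eapply pt_resp; [apply (pt_post C (N:=AU) (fun (z0 : X) (h : gdom G3 z0 /\ U z0) => proj1 h) cw _ Hv)|].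
      exact (L5 w _ _ w2). }
    assert (hA := pt_dom C _ _ Pb).
    destruct (F1 _ wN) as [hU _].
    assert (Pa : pt C (mkGerm C (gdom G3) hA (gmap G3)) (g (beta w))).
    { eapply pt_resp; [apply (Hg _ hU)|]. apply geq_sym. exact (L7 _ _ _ wO). }
    assert (P5 := pt_comp C h2 hT1 _ _ _ _ _ w (P1a w w1) _ hA _ Pb Pa).
    assert (P6 : pt C (mkGerm C (gdom G4) (P1a w w1) (comp C (gmap G3) (gmap G4))) w).
    { eapply pt_resp; [apply (pt_id C V w (P1b w w1))|]. apply geq_sym. exact (L4 w _ _ w1). }
    exact (pt_uniq C h2 _ _ _ P5 P6). }
  assert (Nx : N x) by (repeat split; auto).
  assert (My : M (g x)).
  { destruct (F1 x Nx) as [_ [hB Eb]].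
    repeat split; auto; rewrite Eb; auto. }
  assert (Gc := bar_cont C h2 _ _ f g Hg).
  assert (Bc := bar_cont C h2 _ _ (gmap G1) beta Hb).
  exists (fun z => N z /\ M (g z)).
  split.
  { apply (open_ext (fun z => N z /\ (U z /\ M (g z)))).
    - intro z; split; [tauto|]. intros [Nz Mz]. split; auto. split; auto. apply (F1 z Nz).
    - apply open_inter; auto. }
  split; [split; auto|].
  split; [intros z [Nz _]; apply (F1 z Nz)|].
  set (I := fun y : X => exists z : X, (N z /\ M (g z)) /\ g z = y).
  assert (Ich : forall w, I w <-> M w /\ (gdom G1 w /\ N (beta w))).
  { intro w; split.
    - intros [z [[Nz Mz] <-]]. destruct (F1 z Nz) as [_ [hB Eb]]. rewrite Eb. auto.
    - intros [Mw [_ Nb]]. exists (beta w). destruct (F2 w Mw) as [_ E2]. rewrite E2. auto. }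
  split.
  { apply (open_ext (fun w => M w /\ (gdom G1 w /\ N (beta w)))).
    - intro w; generalize (Ich w); unfold I; tauto.
    - apply open_inter; auto. }
  exists beta. split; [intros z [Nz _]; apply (F1 z Nz)|].
  split.
  { intros w [z [[Nz Mz] <-]]. destruct (F1 z Nz) as [_ [_ Eb]]. rewrite Eb. auto. }
  split.
  { intros W HW. apply (open_ext (fun z => (N z /\ M (g z)) /\ (U z /\ W (g z)))).
    - intro z; split; [tauto|]. intros [[Nz Mz] Wz]. split; [split; [exact Nz|exact Mz]|split; [apply (F1 z Nz)|exact Wz]].
    - apply open_inter; [|apply Gc; auto].
      apply (open_ext (fun z => N z /\ (U z /\ M (g z)))).
      + intro z; split; [tauto|]. intros [Nz Mz]. split; auto. split; auto. apply (F1 z Nz).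
      + apply open_inter; auto. }
  { intros W HW. apply (open_ext (fun w => (M w /\ (gdom G1 w /\ N (beta w))) /\ (gdom G1 w /\ W (beta w)))).
    - intro w; generalize (Ich w); unfold I; tauto.
    - apply open_inter; [apply open_inter; auto|apply Bc; auto]. }
Qed.
End N.

Theorem mainTheorem3 (X : Type) (T : Topology X) (C : PCat T)
    (hT1 : T1 T) (hC : pre_pseudogroup C)
    (U V : Opn T) (f : hom C U V) :
  (exists g : X -> X, underlying_map C f g) /\
  (forall g : X -> X, underlying_map C f g ->
     continuous_on T U V g /\ local_homeo T U V g).
Proof.
  destruct hC as [h2 h3]. split.
  - destruct (bar_ex C h2 U V f) as [g Hg]. exists g. exact Hg.
  - intros g Hg.
    assert (Hg' : forall z (hz : U z), pt C (mkGerm C U hz f) (g z)) by exact Hg.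
    split.
    + split; [intros z hz; exact (pt_dom C _ _ (Hg' z hz))|].
      apply (bar_cont C h2 _ _ f g Hg').
    + split; [intros z hz; exact (pt_dom C _ _ (Hg' z hz))|].
      intros x hx. exact (local_part C h2 h3 hT1 U V f g Hg' x hx).
Qed.
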